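(* Let $a:\mathbb{Z}\curvearrowright X$ be a free Borel action of $\mathbb{Z}$ on a standard Borel space $X$, and let $S=\{1,-1\}$. Suppose $V\subseteq X$ is a Borel set such that every injective $G(a,S)$-ray contains infinitely many edges with both endpoints in $V$. Then there is a Borel edge coloring of $G(a,S)$ with colors $\{1,2,3\}$ such that the color $3$ is used only on edges with both endpoints in $V$.
   Context: $G(a,S)$ is the graph on $X$ with $x,y$ adjacent iff $y=x+1$ or $y=x-1$ under the action. An injective $G$-ray is an injective sequence $x_0,x_1,\dots$ with each $(x_i,x_{i+1})$ an edge. An edge coloring gives distinct colors to edges sharing a vertex. *)

(* Defs.v *)
From HB Require Import structures.
From mathcomp Require Import all_boot all_order all_algebra.
From mathcomp Require Import all_classical all_reals all_analysis.
From mathcomp Require Import Rstruct Rstruct_topology.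
Set Implicit Arguments. Unset Strict Implicit. Unset Printing Implicit Defensive.
Import Order.TTheory GRing.Theory Num.Theory.
Local Open Scope classical_set_scope.
Local Open Scope ring_scope.

Definition is_metric (X : Type) (d : X -> X -> Rdefinitions.R) : Prop :=
  (forall x y, 0 <= d x y) /\ (forall x y, d x y = 0 <-> x = y) /\
  (forall x y, d x y = d y x) /\ (forall x y z, d x z <= d x y + d y z).

Definition metric_compatible (X : topologicalType) (d : X -> X -> Rdefinitions.R) : Prop :=
  forall U : set X, open U <->
    (forall x, U x -> exists e : Rdefinitions.R, 0 < e /\ forall y, d x y < e -> U y).

Definition metric_complete (X : Type) (d : X -> X -> Rdefinitions.R) : Prop :=
  forall u : nat -> X,
    (forall e : Rdefinitions.R, 0 < e -> exists N, forall m n, (N <= m)%N -> (N <= n)%N -> d (u m) (u n) < e) ->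
    exists l, forall e : Rdefinitions.R, 0 < e -> exists N, forall n, (N <= n)%N -> d (u n) l < e.

Definition polish (X : topologicalType) : Prop :=
  (exists D : set X, countable D /\ closure D = setT) /\
  (exists d : X -> X -> Rdefinitions.R, is_metric d /\ metric_compatible d /\ metric_complete d).

Definition Borel (X : topologicalType) (A : set X) : Prop :=
  smallest (sigma_algebra setT) (@open X) A.

Definition Borel2 (X : topologicalType) (A : set (X * X)) : Prop :=
  smallest (sigma_algebra setT)
    [set C | exists B1 B2 : set X, Borel B1 /\ Borel B2 /\ C = B1 `*` B2] A.

Definition Borel_map (X : topologicalType) (f : X -> X) : Prop :=
  forall A : set X, Borel A -> Borel (f @^-1` A).

Definition free_Borel_Z_action (X : topologicalType) (a : int -> X -> X) : Prop :=
  (forall x, a 0 x = x) /\ (forall m n x, a (m + n) x = a m (a n x)) /\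
  (forall n, Borel_map (a n)) /\ (forall n x, a n x = x -> n = 0).

Definition Gadj (X : Type) (a : int -> X -> X) (x y : X) : Prop :=
  y = a 1 x \/ y = a (-1) x.

Definition injective_ray (X : Type) (a : int -> X -> X) (r : nat -> X) : Prop :=
  injective r /\ forall i, Gadj a (r i) (r i.+1).

Definition edge_coloring (X : Type) (a : int -> X -> X) (K : set nat)
    (c : X -> X -> nat) : Prop :=
  (forall x y, Gadj a x y -> c x y = c y x) /\
  (forall x y, Gadj a x y -> K (c x y)) /\
  (forall x y z, Gadj a x y -> Gadj a x z -> y <> z -> c x y <> c x z).

Definition Borel_edge_coloring (X : topologicalType) (a : int -> X -> X)
    (c : X -> X -> nat) : Prop :=
  forall k : nat, Borel2 [set p : X * X | Gadj a p.1 p.2 /\ c p.1 p.2 = k].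

(* Main.v *)
Require Import Defs.
From HB Require Import structures.
From mathcomp Require Import all_boot all_order all_algebra.
From mathcomp Require Import all_classical all_reals all_analysis.
From mathcomp Require Import lra zify Rstruct Rstruct_topology.
Import Order.TTheory GRing.Theory Num.Theory.
Local Open Scope classical_set_scope.
Local Open Scope ring_scope.

Section SA.
Context {T : Type} {G : set (set T)}.
Let S := smallest (sigma_algebra setT) G.
Let SS : sigma_algebra setT S := smallest_sigma_algebra setT G.

Lemma S_gen {A} : G A -> S A.
Proof. exact: sub_gen_smallest. Qed.
Lemma S_false : S (fun _ => False).
Proof. by case: SS. Qed.
Lemma S_not {A} : S A -> S (fun x => ~ A x).
Proof.
case: SS => _ H _ /H; rewrite (_ : setT `\` A = fun x => ~ A x) //.
by apply/seteqP; split => x /=; [case|split].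
Qed.
Lemma S_true : S (fun _ => True).
Proof.
have := S_not S_false; rewrite (_ : (fun _ : T => ~ False) = fun _ => True) //.
by apply/funext => x; apply/propext; split => // _ [].
Qed.
Lemma S_exists {A : nat -> set T} : (forall n, S (A n)) -> S (fun x => exists n, A n x).
Proof.
case: SS => _ _ H /H; rewrite (_ : \bigcup_k A k = fun x => exists n, A n x) //.
by apply/seteqP; split => x /=; [case=> n _ ?; exists n|case=> n ?; exists n].
Qed.
Lemma S_forall {A : nat -> set T} : (forall n, S (A n)) -> S (fun x => forall n, A n x).
Proof.
move=> H; have := S_not (S_exists (fun n => S_not (H n))).
rewrite (_ : (fun x => ~ (exists n, ~ A n x)) = fun x => forall n, A n x) //.
apply/funext => x; apply/propext; split.
  by move=> h n; apply: contrapT => hn; apply: h; exists n.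
by move=> h [n]; apply.
Qed.
Lemma S_or {A B} : S A -> S B -> S (fun x => A x \/ B x).
Proof.
move=> HA HB; have := S_exists (A := fun n => if n == 0%N then A else B).
rewrite (_ : (fun x => exists n, (if n == 0%N then A else B) x) = fun x => A x \/ B x).
  by apply; case.
apply/funext => x; apply/propext; split.
  by case=> -[|n] /=; [left|right].
by case=> h; [exists 0%N|exists 1%N].
Qed.
Lemma S_and {A B} : S A -> S B -> S (fun x => A x /\ B x).
Proof.
move=> HA HB; have := S_not (S_or (S_not HA) (S_not HB)).
rewrite (_ : (fun x => ~ (~ A x \/ ~ B x)) = fun x => A x /\ B x) //.
apply/funext => x; apply/propext; split.
  by move=> h; split; apply: contrapT => ?; apply: h; [left|right].
by case=> ?? [].
Qed.
Lemma S_forallP (P : nat -> Prop) (A : nat -> set T) :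
  (forall n, P n -> S (A n)) -> S (fun x => forall n, P n -> A n x).
Proof.
move=> H; have := S_forall (A := fun n x => P n -> A n x); apply => n.
case: (pselect (P n)) => Pn.
  rewrite (_ : (fun x => P n -> A n x) = A n); first exact: H.
  by apply/funext => x; apply/propext; split => [h|h _] //; apply: h.
rewrite (_ : (fun x => P n -> A n x) = fun _ => True); first exact: S_true.
by apply/funext => x; apply/propext; split => // _ /Pn.
Qed.
Lemma S_existsP (P : nat -> Prop) (A : nat -> set T) :
  (forall n, P n -> S (A n)) -> S (fun x => exists n, P n /\ A n x).
Proof.
move=> H; have := S_exists (A := fun n x => P n /\ A n x); apply => n.
case: (pselect (P n)) => Pn.
  rewrite (_ : (fun x => P n /\ A n x) = A n); first exact: H.
  by apply/funext => x; apply/propext; split => [[]|].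
rewrite (_ : (fun x => P n /\ A n x) = fun _ => False); first exact: S_false.
by apply/funext => x; apply/propext; split => [[]|].
Qed.
Lemma S_ext {A} B : S A -> (forall x, A x <-> B x) -> S B.
Proof.
move=> h e; rewrite (_ : B = A) //; apply/funext => x; apply/propext; split; apply e.
Qed.
End SA.

Lemma small_inv (eps : Rdefinitions.R) : 0 < eps -> exists m : nat, (m.+1%:R)^-1 < eps / 2.
Proof.
move=> he.
have h0 : 0 <= (eps / 2)^-1 by rewrite invr_ge0; lra.
have := archi_boundP h0; set N := Num.bound _ => hN.
exists N.
have hm : (0 : Rdefinitions.R) < N.+1%:R by rewrite ltr0n.
set r := (N.+1%:R)^-1.
have hr : r * N.+1%:R = 1 by rewrite mulVf // gt_eqF.
have hr0 : 0 < r by rewrite invr_gt0.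
have h1 : 1 < eps / 2 * N%:R.
  have hq : eps / 2 * (eps / 2)^-1 = 1 by rewrite mulfV //; apply/eqP; lra.
  nra.
have h2 : (N%:R : Rdefinitions.R) < N.+1%:R by rewrite ltr_nat.
nra.
Qed.

Lemma sep_family (X : topologicalType) : polish X ->
  exists B : nat -> set X, (forall k, Borel (B k)) /\
    (forall x y1 y2, x <> y1 -> x <> y2 -> exists k, B k x /\ ~ B k y1 /\ ~ B k y2).
Proof.
case=> -[D [cD clD]] [d [[d0 [dxy [dsym dtri]]] [dc _]]].
have ball_open c r : open (fun y => d c y < r).
  apply/dc => x hx; exists (r - d c x); split; first lra.
  move=> y hy; have := dtri c x y; lra.
case/pfcard_geP: cD => [D0|Hf].
  exists (fun _ => set0); split; first by move=> k; exact: S_false.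
  move=> x; have : [set: X] x by [].
  by rewrite -clD D0 closure0.
have [e De] : exists e : nat -> X, D = e @` setT by apply/surjfunPex.
have dense x eps : 0 < eps -> exists n, d (e n) x < eps.
  move=> he; have : closure D x by rewrite clD.
  move=> /(_ (fun y => d x y < eps)) [].
    apply: open_nbhs_nbhs; split; first exact: ball_open.
    by rewrite /= (proj2 (dxy x x) erefl).
  move=> z [Dz hz]; rewrite De in Dz; case: Dz => n _ enz.
  by exists n; rewrite dsym enz.
exists (fun k => match @unpickle (nat * nat)%type k with
                 | Some (n, m) => (fun y => d (e n) y < (m.+1%:R)^-1 : Prop)
                 | None => set0 end).
split.
  move=> k; case: unpickle => [[n m]|]; last exact: S_false.
  by apply: S_gen; exact: ball_open.
move=> x y1 y2 h1 h2.
have p1 : 0 < d x y1 by rewrite lt_def d0 andbT; apply/eqP => /dxy.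
have p2 : 0 < d x y2 by rewrite lt_def d0 andbT; apply/eqP => /dxy.
pose del := Num.min (d x y1) (d x y2).
have pd : 0 < del by rewrite lt_min p1 p2.
have d1 : del <= d x y1 by rewrite ge_min lexx.
have d2 : del <= d x y2 by rewrite ge_min lexx orbT.
clearbody del.
have [m hm] := small_inv _ pd.
have hm0 : (0 : Rdefinitions.R) < (m.+1%:R)^-1 by rewrite invr_gt0 ltr0n.
have [n hn] := dense x _ hm0.
exists (pickle ((n, m) : nat * nat)); rewrite pickleK; split => //.
split => hy.
  have := dtri x (e n) y1; rewrite dsym in hn; set r := (m.+1%:R^-1) in hm hn hy *; idtac.
move=> ht. have h3 : d x y1 < r + r by apply: (le_lt_trans ht); apply: ltrD. have h4 : r + r < del by lra. have h5 := lt_le_trans h4 d1. by have := lt_trans h5 h3; rewrite ltxx.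
have := dtri x (e n) y2; rewrite dsym in hn; set r := (m.+1%:R^-1) in hm hn hy *.
move=> ht. have h3 : d x y2 < r + r by apply: (le_lt_trans ht); apply: ltrD. have h4 : r + r < del by lra. have h5 := lt_le_trans h4 d2. by have := lt_trans h5 h3; rewrite ltxx.
Qed.

Lemma Borel2_eq (X : topologicalType) (B : nat -> set X) :
  (forall k, Borel (B k)) ->
  (forall x y, x <> y -> exists k, B k x /\ ~ B k y) ->
  forall f g : X -> X, Borel_map f -> Borel_map g ->
  Borel2 (fun p : X * X => f p.1 = g p.2).
Proof.
move=> hB sep f g hf hg.
have R1 (A : set X) : Borel A -> Borel2 (fun p : X * X => A p.1).
  move=> hA; apply: (S_ext (A := A `*` setT)).
    by apply: S_gen; exists A, setT; split => //; split => //; exact: S_true.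
  by move=> p; split => [[]|] //.
have R2 (A : set X) : Borel A -> Borel2 (fun p : X * X => A p.2).
  move=> hA; apply: (S_ext (A := setT `*` A)).
    by apply: S_gen; exists setT, A; split; first exact: S_true.
  by move=> p; split => [[]|] //.
apply: (S_ext (A := fun p : X * X => forall k,
   (B k (f p.1) /\ B k (g p.2)) \/ (~ B k (f p.1) /\ ~ B k (g p.2)))).
  apply: S_forall => k; apply: S_or; apply: S_and.
  - exact: (R1 _ (hf _ (hB k))).
  - exact: (R2 _ (hg _ (hB k))).
  - exact: (S_not (R1 _ (hf _ (hB k)))).
  - exact: (S_not (R2 _ (hg _ (hB k)))).
move=> p; split => [h|->]; last first.
  by move=> k; case: (pselect (B k (g p.2))) => h; [left|right].
apply: contrapT => ne; have [k [h1 h2]] := sep _ _ ne.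
by case: (h k) => -[].
Qed.

Definition goodk {X : Type} (a : int -> X -> X) (B : nat -> set X) k x :=
  B k x /\ ~ B k (a 1 x) /\ ~ B k (a (-1) x).
Definition Kc {X : Type} (a : int -> X -> X) (B : nat -> set X) n x :=
  goodk a B n x /\ forall m, (m < n)%N -> ~ goodk a B m x.
Fixpoint Iset {X : Type} (a : int -> X -> X) (B : nat -> set X) (W : set X) n : set X :=
  match n with
  | 0%N => set0
  | n'.+1 => fun x => Iset a B W n' x \/
      (W x /\ Kc a B n' x /\ ~ Iset a B W n' (a 1 x) /\ ~ Iset a B W n' (a (-1) x))
  end.
Definition Mset {X : Type} (a : int -> X -> X) (B : nat -> set X) (W : set X) x :=
  exists n, Iset a B W n x.
Definition firstM {X : Type} (a : int -> X -> X) (M : set X) z n :=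
  (0 < n)%N /\ M (a (- (n%:Z)) z) /\ forall m, (0 < m < n)%N -> ~ M (a (- (m%:Z)) z).
Definition colz {X : Type} (a : int -> X -> X) (M : set X) z : nat :=
  if pselect (M z) then 3%N
  else if pselect (exists n, odd n /\ firstM a M z n) then 1%N else 2%N.
Definition ccz {X : Type} (a : int -> X -> X) (M : set X) x y : nat :=
  if pselect (y = a 1 x) then colz a M x else colz a M y.


Section Main.
Context (X : Type) (a : int -> X -> X).
Hypothesis ha0 : forall x, a 0 x = x.
Hypothesis haD : forall m n x, a (m + n) x = a m (a n x).
Hypothesis hfree : forall n x, a n x = x -> n = 0.

Lemma a1m1 x : a 1 (a (-1) x) = x.
Proof. by rewrite -haD addrN ha0. Qed.
Lemma am11 x : a (-1) (a 1 x) = x.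
Proof. by rewrite -haD addNr ha0. Qed.
Lemma a11 x : a 1 (a 1 x) <> x.
Proof. by rewrite -haD => /hfree; lia. Qed.
Lemma a1x x : a 1 x <> x.
Proof. by move=> /hfree. Qed.
Lemma am1x x : a (-1) x <> x.
Proof. by move=> /hfree. Qed.
Lemma shift1 z k : a (- (k.+1)%:Z) (a 1 z) = a (- k%:Z) z.
Proof. by rewrite -haD; congr (a _ z); lia. Qed.

Context (B : nat -> set X) (W : set X).
Hypothesis sep : forall x y1 y2, x <> y1 -> x <> y2 -> exists k, B k x /\ ~ B k y1 /\ ~ B k y2.

Lemma Kc_ex x : exists n, Kc a B n x.
Proof.
have [k hk] := @sep x _ _ (nesym (a1x x)) (nesym (am1x x)).
have ex : exists k, `[< goodk a B k x >] by exists k; apply/asboolP.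
case: (ex_minnP ex) => n /asboolP hn hmin; exists n; split => // m hm hg.
by have := hmin m (asboolT hg); rewrite leqNgt hm.
Qed.

Lemma Kc_indep n x : Kc a B n x -> Kc a B n (a 1 x) -> False.
Proof. by move=> [[_ [h _]] _] [[h' _] _]. Qed.

Lemma I_mono n m x : (n <= m)%N -> Iset a B W n x -> Iset a B W m x.
Proof.
move=> /subnK <-; elim: (m - n)%N => // k IH h.
by rewrite addSn; left; apply: IH.
Qed.

Lemma I_new k x : Iset a B W k x -> exists n, (n < k)%N /\
  W x /\ Kc a B n x /\ ~ Iset a B W n (a 1 x) /\ ~ Iset a B W n (a (-1) x) /\
  ~ Iset a B W n x.
Proof.
elim: k => [//|k IH] /= [h|[hW [hK [h1 h2]]]].
  by have [n [hn rest]] := IH h; exists n; split => //; apply: ltnW.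
case: (pselect (Iset a B W k x)) => hk.
  by have [n [hn rest]] := IH hk; exists n; split => //; apply: ltnW.
by exists k.
Qed.

Let M := Mset a B W.

Lemma M_W x : M x -> W x.
Proof. by case=> k /I_new [n [_ [hW _]]]. Qed.

Lemma M_indep x : M x -> M (a 1 x) -> False.
Proof.
case=> k hk; have hW := M_W x (ex_intro _ k hk).
case: (I_new _ _ hk) => n [_ [_ [Kn [hn1 [hn2 hnx]]]]].
case=> k' hk'; have hW' := M_W (a 1 x) (ex_intro _ k' hk').
case: (I_new _ _ hk') => m [_ [_ [Km [hm1 [hm2 hmx]]]]].
rewrite am11 in hm2.
case: (ltngtP n m) => [lt|lt|/eqP eq].
- by apply: hm2; apply: (I_mono _ _ _ lt); right; split; [|split; [|split]].
- apply: hn1; apply: (I_mono _ _ _ lt); right; split; [|split; [|split]] => //.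
  by rewrite am11.
- by move/eqP: eq => eq; subst; apply: (Kc_indep _ _ Kn Km).
Qed.

Lemma M_max x : W x -> ~ M x -> M (a 1 x) \/ M (a (-1) x).
Proof.
move=> hW hM; have [n hn] := Kc_ex x.
case: (pselect (Iset a B W n (a 1 x))) => h1; first by left; exists n.
case: (pselect (Iset a B W n (a (-1) x))) => h2; first by right; exists n.
by exfalso; apply: hM; exists n.+1; right; split; [|split; [|split]].
Qed.

Hypothesis Wunb : forall z N, exists n, (N < n)%N /\ W (a (- n%:Z) z).

Lemma shiftm1 z k : a (-1) (a (- k%:Z) z) = a (- (k.+1)%:Z) z.
Proof. by rewrite -haD; congr (a _ z); lia. Qed.
Lemma shiftp1 z k : a 1 (a (- (k.+1)%:Z) z) = a (- k%:Z) z.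
Proof. by rewrite -haD; congr (a _ z); lia. Qed.

Lemma M_unb z : exists n, (0 < n)%N /\ M (a (- n%:Z) z).
Proof.
have [[|n] [hn hW]] := Wunb z 1; first by [].
case: (pselect (M (a (- (n.+1)%:Z) z))) => hM; first by exists n.+1.
case: (M_max _ hW hM) => h.
  by exists n; split; [lia|rewrite -(shiftp1 z n)].
by exists n.+2; split => //; rewrite -shiftm1.
Qed.

Lemma first_ex z : exists n, firstM a M z n.
Proof.
have ex : exists n, `[< (0 < n)%N /\ M (a (- n%:Z) z) >].
  by have [n hn] := M_unb z; exists n; apply/asboolP.
case: (ex_minnP ex) => n /asboolP [h0 h1] hmin; exists n; split => //; split => //.
move=> m /andP [m0 mn] hm.
by have := hmin m (asboolT (conj m0 hm)); rewrite leqNgt mn.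
Qed.

Lemma first_uniq z n m : firstM a M z n -> firstM a M z m -> n = m.
Proof.
move=> [n0 [hn fn]] [m0 [hm fm]].
case: (ltngtP n m) => [lt|lt|/eqP //].
- by exfalso; apply: (fm n) => //; rewrite n0 lt.
- by exfalso; apply: (fn m) => //; rewrite m0 lt.
Qed.

Lemma first_shift z n : ~ M z -> firstM a M z n -> firstM a M (a 1 z) n.+1.
Proof.
move=> hz [n0 [hn fn]]; split => //; split; first by rewrite shift1.
move=> [|[|m]] // /andP [_ hm].
  by rewrite (_ : - (1%N)%:Z = -1) // am11.
rewrite shift1; apply: fn; lia.
Qed.

Lemma colz_first z n : ~ M z -> firstM a M z n -> colz a M z = if odd n then 1%N else 2%N.
Proof.
move=> hz hf; rewrite /colz; destruct (pselect (M z)) as [hh|hnz]; first by [].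
destruct (pselect (exists n, odd n /\ firstM a M z n)) as [[m [om hm]]|ne].
  simpl; have e := first_uniq _ _ _ hf hm; rewrite -e in om; by rewrite om.
case: ifP => // on; exfalso; apply: ne; exists n; split => //; rewrite on.
Qed.

Lemma colz_range z : colz a M z = 1%N \/ colz a M z = 2%N \/ colz a M z = 3%N.
Proof. rewrite /colz; destruct (pselect (M z)) as [h|h]; [|destruct (pselect (exists n, odd n /\ firstM a M z n)) as [h'|h']]; auto. Qed.

Lemma colz_3 z : colz a M z = 3%N -> M z.
Proof. rewrite /colz; destruct (pselect (M z)) as [h|h]; first by []; destruct (pselect (exists n, odd n /\ firstM a M z n)) as [h'|h'] => //. Qed.

Lemma colz_M z : M z -> colz a M z = 3%N.
Proof. move=> h; rewrite /colz; destruct (pselect (M z)) as [h'|h'] => //. Qed.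

Lemma colz_proper z : colz a M z <> colz a M (a 1 z).
Proof.
case: (pselect (M z)) => hz.
  rewrite colz_M // => h; apply: (M_indep _ hz); exact: colz_3.
case: (pselect (M (a 1 z))) => h1.
  by rewrite (colz_M _ h1) => /colz_3.
have [n hn] := first_ex z.
rewrite (colz_first _ _ hz hn) (colz_first _ _ h1 (first_shift _ _ hz hn)) /=.
by case: (odd n).
Qed.
End Main.

Lemma S_const {T : Type} {G : set (set T)} (P : Prop) :
  smallest (sigma_algebra setT) G (fun _ : T => P).
Proof.
case: (pselect P) => hP.
  by apply: (S_ext (A := fun _ => True)); [exact: S_true|].
by apply: (S_ext (A := fun _ => False)); [exact: S_false|].
Qed.

Section Bor.
Context (X : topologicalType) (a : int -> X -> X) (B : nat -> set X) (W : set X).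
Hypothesis hB : forall k, Borel (B k).
Hypothesis ha : forall n, Borel_map (a n).
Hypothesis hW : Borel W.

Lemma goodk_Borel k : Borel (goodk a B k).
Proof.
apply: S_and; first exact: hB.
by apply: S_and; apply: S_not; apply: ha.
Qed.

Lemma Kc_Borel n : Borel (Kc a B n).
Proof.
apply: S_and; first exact: goodk_Borel.
apply: (S_forallP (fun m => (m < n)%N) (fun m x => ~ goodk a B m x)).
by move=> m _; apply: S_not; exact: goodk_Borel.
Qed.

Lemma I_Borel n : Borel (Iset a B W n).
Proof.
elim: n => [|n IH] /=; first exact: S_false.
apply: S_or => //; apply: S_and => //; apply: S_and; first exact: Kc_Borel.
by apply: S_and; apply: S_not; apply: ha.
Qed.

Lemma M_Borel : Borel (Mset a B W).
Proof. by apply: S_exists => n; exact: I_Borel. Qed.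

Lemma E_Borel : Borel (fun z => exists n, odd n /\ firstM a (Mset a B W) z n).
Proof.
apply: (S_existsP (fun n => odd n) (fun n z => firstM a (Mset a B W) z n)).
move=> n _; apply: S_and; first exact: S_const.
apply: S_and; first by apply: ha; exact: M_Borel.
apply: (S_forallP (fun m => (0 < m < n)%N)
   (fun m z => ~ Mset a B W (a (- m%:Z) z))).
by move=> m _; apply: S_not; apply: ha; exact: M_Borel.
Qed.

Lemma colz_Borel k : Borel (fun z => colz a (Mset a B W) z = k).
Proof.
set M := Mset a B W.
set E := fun z => exists n, odd n /\ firstM a M z n.
apply: (S_ext (A := fun z => (M z /\ 3%N = k) \/ (~ M z /\ E z /\ 1%N = k) \/
                              (~ M z /\ ~ E z /\ 2%N = k))).
  apply: S_or; [apply: S_and; [exact: M_Borel|exact: S_const]|].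
  apply: S_or; apply: S_and; try (apply: S_not); try exact: M_Borel.
    by apply: S_and; [exact: E_Borel|exact: S_const].
  by apply: S_and; [apply: S_not; exact: E_Borel|exact: S_const].
move=> z; rewrite /colz; destruct (pselect (M z)) as [h|h].
  rewrite /is_left /=; split => [|<-]; last by left; split.
  by case=> [[_ ->]|[[hm _]|[hm _]]] //; exfalso; apply: hm.
destruct (pselect (exists n, odd n /\ firstM a M z n)) as [h'|h'].
  rewrite /is_left /=; split => [|<-]; last by right; left; split => //; split.
  by case=> [[hm _]|[[_ [_ ->]]|[_ [hn _]]]] //; exfalso; first [exact: h hm | exact: hn h'].
rewrite /is_left /=; split => [|<-]; last by right; right; split => //; split.
by case=> [[hm _]|[[_ [hn _]]|[_ [_ ->]]]] //; exfalso; first [exact: h hm | exact: h' hn].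
Qed.
End Bor.

Theorem lemma2 (X : topologicalType) (a : int -> X -> X) (V : set X) :
  polish X -> free_Borel_Z_action a -> Borel V ->
  (forall r : nat -> X, injective_ray a r ->
     forall N : nat, exists i : nat, (N <= i)%N /\ V (r i) /\ V (r i.+1)) ->
  exists c : X -> X -> nat,
    edge_coloring a [set k | k = 1%N \/ k = 2%N \/ k = 3%N] c /\
    Borel_edge_coloring a c /\
    (forall x y, Gadj a x y -> c x y = 3%N -> V x /\ V y).
Proof.
move=> pol [ha0 [haD [hBor hfree]]] BV hray.
have [B [hB sep]] := sep_family _ pol.
pose W := fun x => V x /\ V (a 1 x).
have BW : Borel W by apply: S_and => //; apply: hBor.
have Wunb : forall z N, exists n, (N < n)%N /\ W (a (- n%:Z) z).
  move=> z N.
  have inj : injective_ray a (fun i => a (- i%:Z) z).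
    split.
      move=> i j /(congr1 (a j%:Z)); rewrite -!haD addrN ha0 => /hfree; lia.
    by move=> i; right; rewrite (shiftm1 _ _ haD).
  have [i [hi [v1 v2]]] := hray _ inj N.
  exists i.+1; split => //; split => //.
  by rewrite (shiftp1 _ _ haD).
set M := Mset a B W.
exists (ccz a M).
have a11' := a11 _ _ haD hfree.
have a1m1' := a1m1 _ _ ha0 haD.
have am11' := am11 _ _ ha0 haD.
have prop := colz_proper _ _ ha0 haD hfree _ _ sep Wunb.
have MW := M_W _ a B W.
have c3 := colz_3 _ a B W.
split; [split; [|split]|split].
- move=> x y [->|->]; rewrite /ccz.
    destruct (pselect (a 1 x = a 1 x)) as [hh|n]; last by [].
    by destruct (pselect (x = a 1 (a 1 x))) as [e|ne]; [exfalso; apply: (a11' x)|].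
  destruct (pselect (a (-1) x = a 1 x)) as [e|ne].
    by exfalso; apply: (a11' x); rewrite -[X in a 1 X]e a1m1'.
  by destruct (pselect (x = a 1 (a (-1) x))) as [hh|n]; [|exfalso; apply: n].
- move=> x y _; rewrite /ccz; destruct (pselect (y = a 1 x)) as [hh|nn]; apply: colz_range.
- move=> x y z hy hz yz; rewrite /ccz.
  have key : forall y1 z1, y1 = a 1 x -> z1 = a (-1) x -> ccz a M x y1 <> ccz a M x z1.
    move=> y1 z1 -> ->; rewrite /ccz.
    destruct (pselect (a 1 x = a 1 x)) as [hh|n]; last by [].
    destruct (pselect (a (-1) x = a 1 x)) as [e|ne].
      by exfalso; apply: (a11' x); rewrite -[X in a 1 X]e a1m1'.
    rewrite /is_left /=; by rewrite -{1}(a1m1' x) => /esym; apply: prop.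
  case: hy => ey; case: hz => ez.
  + by exfalso; apply: yz; rewrite ey ez.
  + exact: key.
  + by move=> /esym; apply: key.
  + by exfalso; apply: yz; rewrite ey ez.
- move=> k.
  apply: (S_ext (A := fun p : X * X => (a 1 p.1 = id p.2 /\ colz a M p.1 = k) \/
                                     (id p.1 = a 1 p.2 /\ colz a M p.2 = k))).
    have sep2 : forall x y, x <> y -> exists k, B k x /\ ~ B k y.
      by move=> x y xy; have [k' [h1 [h2 _]]] := sep _ _ _ xy xy; exists k'.
    have hid : Borel_map (@id X) by [].
    apply: S_or; apply: S_and.
    + exact: (Borel2_eq _ _ hB sep2 _ _ (hBor 1) hid).
    + apply: (S_ext (A := (fun x => colz a M x = k) `*` setT)).
        apply: S_gen; exists (fun x => colz a M x = k), setT; split.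
          exact: (colz_Borel _ _ _ _ hB hBor BW).
        by split => //; exact: S_true.
      by move=> p; split => [[]|].
    + exact: (Borel2_eq _ _ hB sep2 _ _ hid (hBor 1)).
    + apply: (S_ext (A := setT `*` (fun x => colz a M x = k))).
        apply: S_gen; exists setT, (fun x => colz a M x = k); split.
          exact: S_true.
        by split => //; exact: (colz_Borel _ _ _ _ hB hBor BW).
      by move=> p; split => [[]|].
  case=> x y /=; rewrite /ccz; split.
    case=> -[e h].
      split; first by left.
      by rewrite -e; destruct (pselect (a 1 x = a 1 x)).
    split; first by right; rewrite e am11'.
    destruct (pselect (y = a 1 x)) as [e'|ne] => //.
    by exfalso; apply: (a11' y); rewrite -e -e'.
  case=> -[->|->] h.
    by left; split => //; move: h; destruct (pselect (a 1 x = a 1 x)).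
  right; split; first by rewrite a1m1'.
  move: h; destruct (pselect (a (-1) x = a 1 x)) as [e|ne] => //.
  by exfalso; apply: (a11' x); rewrite -[X in a 1 X]e a1m1'.
- move=> x y [->|->]; rewrite /ccz.
    destruct (pselect (a 1 x = a 1 x)) as [hh|n]; last by [].
    by move/c3/MW => [].
  destruct (pselect (a (-1) x = a 1 x)) as [e|ne].
    by exfalso; apply: (a11' x); rewrite -[X in a 1 X]e a1m1'.
  by move/c3/MW => [h1 h2]; split => //; rewrite -(a1m1' x).
Qed.
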